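(* Let $k\ge 2$ and let $K>0$, $\sigma>0$, $0<d_0<d_1$, $0<\beta\le \tfrac12$, and let $\theta$ be a positive even integer. Consider agents with positions $x_i(t)\in\mathbb{R}^n$ and velocities $v_i(t)\in\mathbb{R}^n$, $i=1,\dots,k$, evolving by $$\dot x_i=v_i,\qquad \dot v_i=\sum_{j=1}^k a_{ij}(x)(v_j-v_i)+\Lambda(v)\sum_{j\neq i} f_0(\|x_i-x_j\|^2)(x_i-x_j)+\Lambda(v)\sum_{j\ne i} f_1(\|x_i-x_j\|^2)(x_j-x_i),$$ where $$a_{ij}(x)=\frac{K}{(\sigma^2+\|x_i-x_j\|^2)^{\beta}},\quad \Lambda(v)=\Big(\frac1k\sum_{i>j}\|v_i-v_j\|^2\Big)^{1/2},\quad f_0(r)=\frac{1}{(r-d_0)^{\theta}},\quad f_1(r)=\frac{1}{(r-d_1)^{\theta}}.$$ Suppose the initial positions satisfy $d_0<\|x_i(0)-x_j(0)\|^2<d_1$ for all $i\neq j$, and let $(x(t),v(t))$ be a solution defined for all $t\ge 0$. Then the average velocity $\bar v(t)=\frac1k\sum_{i=1}^k v_i(t)$ is constant in $t$, the deviations $\|x_i(t)-\bar x(t)\|$ (with $\bar x=\frac1k\sum_i x_i$) remain bounded for $t\ge0$, $\int_0^\infty\big(\sum_{i=1}^k\|v_i(t)-\bar v\|^2\big)^{1/2}dt<\infty$, and $v_i(t)-\bar v\to 0$ as $t\to\infty$ for every $i$; i.e. all velocities converge to a common value.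
   Context: $\|\cdot\|$ is the Euclidean norm. The term $\sum_j a_{ij}(x)(v_j-v_i)$ is the alignment term, the $f_0$ term the separation term, and the $f_1$ term the cohesion term. Note $\Lambda(v)$ equals $\big(\sum_{i=1}^k\|v_i-\bar v\|^2\big)^{1/2}$. *)

(* Defs.v *)
From Stdlib Require Import Reals Lra Lia Arith.
Open Scope R_scope.

Fixpoint fsum (n : nat) (f : nat -> R) : R :=
  match n with
  | O => 0
  | S m => fsum m f + f m
  end.

(* Vectors in R^n are represented by functions nat -> R (coordinates 0..n-1).
   A configuration of k agents is a function nat -> nat -> R
   (agent index 0..k-1, coordinate 0..n-1). *)

Definition norm2 (n : nat) (u : nat -> R) : R := fsum n (fun c => u c ^ 2).

Definition dist2 (n : nat) (p : nat -> nat -> R) (i j : nat) : R :=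
  norm2 n (fun c => p i c - p j c).

Definition acoef (n : nat) (K sigma beta : R) (p : nat -> nat -> R) (i j : nat) : R :=
  K / Rpower (sigma ^ 2 + dist2 n p i j) beta.

Definition Lambda (k n : nat) (w : nat -> nat -> R) : R :=
  sqrt (/ INR k * fsum k (fun i => fsum i (fun j => dist2 n w i j))).

Definition fpot (d : R) (theta : nat) (r : R) : R := / (r - d) ^ theta.

Definition accel (k n : nat) (K sigma beta d0 d1 : R) (theta : nat)
    (p w : nat -> nat -> R) (i c : nat) : R :=
  fsum k (fun j => acoef n K sigma beta p i j * (w j c - w i c))
  + Lambda k n w * fsum k (fun j => if Nat.eqb j i then 0
        else fpot d0 theta (dist2 n p i j) * (p i c - p j c))
  + Lambda k n w * fsum k (fun j => if Nat.eqb j i then 0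
        else fpot d1 theta (dist2 n p i j) * (p j c - p i c)).

Definition avg (k : nat) (p : nat -> nat -> R) (c : nat) : R :=
  / INR k * fsum k (fun i => p i c).

(* (x, v) : R -> (agents -> coords -> R) is a (classical) solution on [0, +oo):
   - the right-hand side is defined along the trajectory
     (||x_i - x_j||^2 avoids the singular values d0, d1),
   - the ODE holds (two-sided derivatives) for every t > 0,
   - x and v are right-continuous at t = 0. *)
Definition is_solution (k n : nat) (K sigma beta d0 d1 : R) (theta : nat)
    (x v : R -> nat -> nat -> R) : Prop :=
  (forall t, 0 <= t -> forall i j, (i < k)%nat -> (j < k)%nat -> i <> j ->
       dist2 n (x t) i j <> d0 /\ dist2 n (x t) i j <> d1)
  /\ (forall t, 0 < t -> forall i c, (i < k)%nat -> (c < n)%nat ->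
       derivable_pt_lim (fun s => x s i c) t (v t i c)
       /\ derivable_pt_lim (fun s => v s i c) t
            (accel k n K sigma beta d0 d1 theta (x t) (v t) i c))
  /\ (forall i c, (i < k)%nat -> (c < n)%nat ->
       limit1_in (fun s => x s i c) (fun s => 0 <= s) (x 0 i c) 0
       /\ limit1_in (fun s => v s i c) (fun s => 0 <= s) (v 0 i c) 0).

(* Main.v *)
Require Import Defs.
From Stdlib Require Import Reals Lra Lia Arith Setoid Morphisms Classical.
Open Scope R_scope.

Lemma fsum_ext n f g : (forall i, (i < n)%nat -> f i = g i) -> fsum n f = fsum n g.
Proof. induction n; simpl; intros H; auto. rewrite IHn by (intros; apply H; lia). rewrite H by lia; auto. Qed.

#[export] Instance fsum_proper n : Proper (pointwise_relation nat eq ==> eq) (fsum n).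
Proof. intros f g H. apply fsum_ext; intros; apply H. Qed.

Lemma fsum_plus n f g : fsum n (fun i => f i + g i) = fsum n f + fsum n g.
Proof. induction n; simpl; [ring|rewrite IHn; ring]. Qed.
Lemma fsum_minus n f g : fsum n (fun i => f i - g i) = fsum n f - fsum n g.
Proof. induction n; simpl; [ring|rewrite IHn; ring]. Qed.
Lemma fsum_opp n f : fsum n (fun i => - f i) = - fsum n f.
Proof. induction n; simpl; [ring|rewrite IHn; ring]. Qed.
Lemma fsum_scal_l n a f : fsum n (fun i => a * f i) = a * fsum n f.
Proof. induction n; simpl; [ring|rewrite IHn; ring]. Qed.
Lemma fsum_scal_r n a f : fsum n (fun i => f i * a) = fsum n f * a.
Proof. induction n; simpl; [ring|rewrite IHn; ring]. Qed.
Lemma fsum_const n a : fsum n (fun _ => a) = INR n * a.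
Proof. induction n; simpl fsum; [simpl; ring|rewrite IHn, S_INR; ring]. Qed.
Lemma fsum_zero n : fsum n (fun _ => 0) = 0.
Proof. rewrite fsum_const; ring. Qed.
Lemma fsum_swap n m (f : nat -> nat -> R) :
  fsum n (fun i => fsum m (fun j => f i j)) = fsum m (fun j => fsum n (fun i => f i j)).
Proof. induction n; simpl. rewrite fsum_zero; auto. rewrite IHn, <- fsum_plus; auto. Qed.
Lemma fsum_le n f g : (forall i, (i < n)%nat -> f i <= g i) -> fsum n f <= fsum n g.
Proof. induction n; simpl; intros H. lra. assert (H1 := H n ltac:(lia)). assert (fsum n f <= fsum n g) by (apply IHn; intros; apply H; lia). lra. Qed.
Lemma fsum_nonneg n f : (forall i, (i < n)%nat -> 0 <= f i) -> 0 <= fsum n f.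
Proof. intros H. replace 0 with (fsum n (fun _ => 0)) by apply fsum_zero. apply fsum_le; auto. Qed.
Lemma fsum_single_le n f i : (forall j, (j < n)%nat -> 0 <= f j) -> (i < n)%nat -> f i <= fsum n f.
Proof. induction n; intros H Hi. lia. simpl. destruct (Nat.eq_dec i n). subst.
  assert (0 <= fsum n f) by (apply fsum_nonneg; intros; apply H; lia). lra.
  assert (f i <= fsum n f) by (apply IHn; [intros; apply H; lia|lia]). assert (0 <= f n) by (apply H; lia). lra. Qed.
Lemma fsum_abs n f : Rabs (fsum n f) <= fsum n (fun i => Rabs (f i)).
Proof. induction n; simpl. rewrite Rabs_R0; lra. eapply Rle_trans. apply Rabs_triang. lra. Qed.

Lemma fsum_tri k (h : nat -> nat -> R) :
  fsum k (fun i => fsum k (fun j => h i j)) =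
  fsum k (fun i => fsum i (fun j => h i j + h j i)) + fsum k (fun i => h i i).
Proof.
  induction k; simpl. ring.
  rewrite fsum_plus, IHk, fsum_plus.
  change (fsum k (h k)) with (fsum k (fun j => h k j)). ring.
Qed.

Lemma fsum_sym2 k (H : nat -> nat -> R) :
  fsum k (fun i => fsum k (fun j => H i j)) = / 2 * fsum k (fun i => fsum k (fun j => H i j + H j i)).
Proof.
  setoid_rewrite fsum_plus. rewrite fsum_plus. rewrite (fsum_swap k k (fun i j => H j i)). change (fun i => fsum k (H i)) with (fun i => fsum k (fun j => H i j)). field.
Qed.

Lemma fsum_tri_sym k (h : nat -> nat -> R) : (forall i j, h i j = h j i) -> (forall i, h i i = 0) ->
  fsum k (fun i => fsum i (fun j => h i j)) = / 2 * fsum k (fun i => fsum k (fun j => h i j)).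
Proof.
  intros Hs H0. rewrite fsum_tri. setoid_rewrite H0. rewrite fsum_zero.
  rewrite (fsum_ext k (fun i => fsum i (fun j => h i j + h j i)) (fun i => 2 * fsum i (fun j => h i j))).
  rewrite fsum_scal_l. field.
  intros i _. rewrite <- fsum_scal_l; apply fsum_ext; intros j _; rewrite (Hs j i); ring.
Qed.

Lemma CS n a b : (fsum n (fun c => a c * b c))^2 <= fsum n (fun c => a c ^2) * fsum n (fun c => b c ^ 2).
Proof.
  set (A := fsum n (fun c => a c ^2)). set (B := fsum n (fun c => b c ^2)). set (C := fsum n (fun c => a c * b c)).
  assert (HB : 0 <= B) by (apply fsum_nonneg; intros; apply pow2_ge_0).
  assert (HA : 0 <= A) by (apply fsum_nonneg; intros; apply pow2_ge_0).
  destruct (Req_dec B 0) as [HB0|HB0].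
  - assert (Hb : forall c, (c < n)%nat -> b c = 0).
    { intros c Hc. assert (b c ^2 <= B) by (apply (fsum_single_le n (fun c => b c ^2)); [intros; apply pow2_ge_0|lia]). nra. }
    assert (C = 0). { unfold C. rewrite (fsum_ext n _ (fun _ => 0)). apply fsum_zero. intros; rewrite Hb; auto; ring. }
    rewrite H, HB0. nra.
  - set (l := C / B).
    assert (0 <= fsum n (fun c => (a c - l * b c)^2)) by (apply fsum_nonneg; intros; apply pow2_ge_0).
    assert (E : fsum n (fun c => (a c - l * b c)^2) = A - 2 * l * C + l^2 * B).
    { unfold A, B, C. rewrite <- fsum_scal_l, <- (fsum_scal_l n (l^2)), <- fsum_minus, <- fsum_plus. apply fsum_ext; intros; ring. }
    rewrite E in H. unfold l in H. assert (0 < B) by lra.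
    assert (0 <= A - C^2/B) by (replace (A - C^2/B) with (A - 2 * (C / B) * C + (C / B) ^ 2 * B) by (field; lra); lra).
    assert (0 <= A * B - C^2). { replace (A*B - C^2) with ((A - C^2/B) * B) by (field; lra). nra. }
    lra.
Qed.

Lemma decr (f f' : R -> R) a b : a <= b -> (forall c, a <= c <= b -> continuity_pt f c) ->
  (forall c, a < c < b -> derivable_pt_lim f c (f' c) /\ f' c <= 0) -> f b <= f a.
Proof.
  intros Hab Hc Hd. destruct (Req_dec a b) as [->|Hne]. lra.
  assert (Hlt : a < b) by lra.
  set (pr1 := fun c (P : a < c < b) => exist (fun l => derivable_pt_lim f c l) (f' c) (proj1 (Hd c P))).
  set (pr2 := fun c (P : a < c < b) => derivable_pt_id c).
  destruct (MVT f id a b pr1 pr2 Hlt Hc (fun c _ => derivable_continuous_pt _ _ (derivable_pt_id c))) as [c [P HP]].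
  unfold pr1, pr2 in HP. simpl in HP. rewrite derive_pt_id in HP. unfold id in HP.
  destruct (Hd c P). nra.
Qed.

Lemma eps_le a b C : (forall e, 0 < e -> a <= b + e * C) -> a <= b.
Proof.
  intros H. destruct (Rle_dec a b) as [|Hn]; auto. exfalso.
  assert (0 < Rabs C + 1) by (generalize (Rabs_pos C); lra).
  set (e := (a - b) / (2 * (Rabs C + 1))).
  assert (0 < e) by (unfold e; apply Rdiv_lt_0_compat; lra).
  specialize (H e H1). assert (e * C <= e * (Rabs C + 1)) by (generalize (Rle_abs C); nra).
  assert (e * (Rabs C + 1) = (a - b)/2) by (unfold e; field; lra). lra.
Qed.

Lemma deriv_fsum n (F : nat -> R -> R) (F' : nat -> R) t :
  (forall i, (i < n)%nat -> derivable_pt_lim (F i) t (F' i)) ->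
  derivable_pt_lim (fun u => fsum n (fun i => F i u)) t (fsum n F').
Proof.
  induction n; intros H; simpl.
  - apply derivable_pt_lim_const.
  - apply (derivable_pt_lim_plus (fun u => fsum n (fun i => F i u)) (F n)).
    apply IHn; intros; apply H; lia. apply H; lia.
Qed.

Lemma cont_fsum n (F : nat -> R -> R) t :
  (forall i, (i < n)%nat -> continuity_pt (F i) t) ->
  continuity_pt (fun u => fsum n (fun i => F i u)) t.
Proof.
  induction n; intros H; simpl.
  - apply continuity_pt_const; intros ? ?; auto.
  - apply (continuity_pt_plus (fun u => fsum n (fun i => F i u)) (F n)).
    apply IHn; intros; apply H; lia. apply H; lia.
Qed.

Lemma deriv_sq f l t : derivable_pt_lim f t l -> derivable_pt_lim (fun u => f u ^ 2) t (2 * f t * l).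
Proof.
  intros H. replace (2 * f t * l) with (l * f t + f t * l) by ring.
  apply (derivable_pt_lim_ext (fun u => f u * f u)). intros; ring.
  apply (derivable_pt_lim_mult f f); auto.
Qed.

Lemma cont_sq f t : continuity_pt f t -> continuity_pt (fun u => f u ^ 2) t.
Proof. intros H. apply (continuity_pt_locally_ext (fun u => f u * f u) _ 1). lra. intros; ring. apply continuity_pt_mult; auto. Qed.

Lemma ext_cont (f : R -> R) :
  limit1_in f (fun s => 0 <= s) (f 0) 0 ->
  (forall t, 0 < t -> continuity_pt f t) ->
  forall t, continuity_pt (fun s => f (Rmax 0 s)) t.
Proof.
  intros H0 Hp t.
  destruct (Rlt_or_le 0 t) as [Ht|Ht].
  - apply (continuity_pt_locally_ext f _ t). auto.
    intros y Hy. unfold Rdist in Hy. rewrite Rmax_right; auto. apply Rabs_def2 in Hy. lra.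
    apply Hp; auto.
  - destruct (Rle_lt_or_eq_dec _ _ Ht) as [Ht'|Ht'].
    + apply (continuity_pt_locally_ext (fun _ => f 0) _ (-t)). lra.
      intros y Hy. unfold Rdist in Hy. apply Rabs_def2 in Hy. rewrite Rmax_left; auto; lra.
      apply continuity_pt_const; intros ? ?; auto.
    + subst t. intros eps Heps. destruct (H0 eps Heps) as [alp [Halp Hal]].
      exists alp. split; auto. intros y [_ Hy]. simpl in *. unfold R_dist in *.
      rewrite (Rmax_left 0 0) by lra.
      destruct (Rle_or_lt 0 y) as [Hy0|Hy0].
      * rewrite Rmax_right by auto. apply Hal. split; auto.
      * rewrite Rmax_left by lra. unfold Rminus; rewrite Rplus_opp_r, Rabs_R0; auto.
Qed.

Lemma ext_deriv (f : R -> R) t l : 0 < t -> derivable_pt_lim f t l ->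
  derivable_pt_lim (fun s => f (Rmax 0 s)) t l.
Proof.
  intros Ht H. apply (derivable_pt_lim_locally_ext f _ t 0 (t+1)); auto. lra.
  intros z Hz. rewrite Rmax_right; auto; lra.
Qed.

Definition Sfun k n (w : nat -> nat -> R) := / INR k * fsum k (fun i => fsum i (fun j => dist2 n w i j)).
Definition gfun d0 d1 theta r := fpot d0 theta r - fpot d1 theta r.
Definition Aterm k n K sigma beta p (w : nat -> nat -> R) :=
  / 2 * fsum k (fun i => fsum k (fun j => acoef n K sigma beta p i j * dist2 n w i j)).
Definition Pder k n d0 d1 theta (p w : nat -> nat -> R) :=
  / 2 * fsum k (fun i => fsum k (fun j => if Nat.eqb j i then 0 else
       gfun d0 d1 theta (dist2 n p i j) * fsum n (fun c => (p i c - p j c) * (w i c - w j c)))).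

Lemma dist2_sym n p i j : dist2 n p i j = dist2 n p j i.
Proof. unfold dist2, norm2. apply fsum_ext; intros; ring. Qed.
Lemma dist2_nonneg n p i j : 0 <= dist2 n p i j.
Proof. unfold dist2, norm2. apply fsum_nonneg; intros; apply pow2_ge_0. Qed.
Lemma dist2_refl n p i : dist2 n p i i = 0.
Proof. unfold dist2, norm2. rewrite (fsum_ext n _ (fun _ => 0)). apply fsum_zero. intros; ring. Qed.
Lemma acoef_sym n K s b p i j : acoef n K s b p i j = acoef n K s b p j i.
Proof. unfold acoef. rewrite dist2_sym; auto. Qed.

Lemma quad_sum k n (w a : nat -> nat -> R) :
  fsum k (fun i => fsum k (fun j => fsum n (fun c => (w i c - w j c) * (a i c - a j c)))) =
  2 * INR k * fsum k (fun i => fsum n (fun c => w i c * a i c))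
  - 2 * fsum n (fun c => fsum k (fun i => w i c) * fsum k (fun i => a i c)).
Proof.
  rewrite (fsum_ext k _ (fun i => fsum k (fun j =>
     fsum n (fun c => w i c * a i c) + fsum n (fun c => w j c * a j c)
     - fsum n (fun c => w i c * a j c) - fsum n (fun c => w j c * a i c)))).
  2: { intros i _. apply fsum_ext; intros j _.
       rewrite <- fsum_plus, <- !fsum_minus. apply fsum_ext; intros; ring. }
  rewrite (fsum_ext k _ (fun i => fsum k (fun j => fsum n (fun c => w i c * a i c))
     + fsum k (fun j => fsum n (fun c => w j c * a j c))
     - fsum k (fun j => fsum n (fun c => w i c * a j c))
     - fsum k (fun j => fsum n (fun c => w j c * a i c)))).
  2: { intros i _. rewrite <- fsum_plus, <- !fsum_minus. reflexivity. }
  rewrite !fsum_minus, fsum_plus.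
  rewrite (fsum_ext k (fun i => fsum k (fun _ => fsum n (fun c => w i c * a i c)))
              (fun i => INR k * fsum n (fun c => w i c * a i c))).
  2: { intros; apply fsum_const. }
  rewrite fsum_const, fsum_scal_l.
  assert (C1 : fsum k (fun i => fsum k (fun j => fsum n (fun c => w i c * a j c))) =
               fsum n (fun c => fsum k (fun i => w i c) * fsum k (fun i => a i c))).
  { rewrite (fsum_ext k _ (fun i => fsum n (fun c => w i c * fsum k (fun j => a j c)))).
    2: { intros i _. rewrite fsum_swap. apply fsum_ext; intros. rewrite fsum_scal_l. reflexivity. }
    rewrite fsum_swap. apply fsum_ext; intros. rewrite fsum_scal_r. reflexivity. }
  assert (C2 : fsum k (fun i => fsum k (fun j => fsum n (fun c => w j c * a i c))) =
               fsum n (fun c => fsum k (fun i => w i c) * fsum k (fun i => a i c))).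
  { rewrite fsum_swap. apply C1. }
  rewrite C1, C2. ring.
Qed.

Lemma accel_split k n K sigma beta d0 d1 theta p w i c :
  accel k n K sigma beta d0 d1 theta p w i c =
  fsum k (fun j => acoef n K sigma beta p i j * (w j c - w i c)
     + Lambda k n w * (if Nat.eqb j i then 0 else gfun d0 d1 theta (dist2 n p i j) * (p i c - p j c))).
Proof.
  unfold accel. rewrite fsum_plus, fsum_scal_l. rewrite <- !fsum_scal_l.
  rewrite Rplus_assoc, <- fsum_plus. f_equal. apply fsum_ext; intros j _.
  unfold gfun. destruct (Nat.eqb j i); ring.
Qed.

Lemma fsum_antisym k (H : nat -> nat -> R) : (forall i j, H i j + H j i = 0) ->
  fsum k (fun i => fsum k (fun j => H i j)) = 0.
Proof.
  intros HH. rewrite fsum_sym2. setoid_rewrite HH. setoid_rewrite fsum_zero. rewrite fsum_zero. ring.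
Qed.

Lemma accel_sum_zero k n K sigma beta d0 d1 theta p w c :
  fsum k (fun i => accel k n K sigma beta d0 d1 theta p w i c) = 0.
Proof.
  setoid_rewrite accel_split. apply fsum_antisym. intros i j.
  rewrite (acoef_sym _ _ _ _ _ j i), (dist2_sym n p j i), (Nat.eqb_sym i j).
  destruct (Nat.eqb j i); ring.
Qed.

Lemma X_identity k n K sigma beta d0 d1 theta p w :
  fsum k (fun i => fsum n (fun c => w i c * accel k n K sigma beta d0 d1 theta p w i c)) =
  - Aterm k n K sigma beta p w + Lambda k n w * Pder k n d0 d1 theta p w.
Proof.
  setoid_rewrite accel_split.
  setoid_rewrite <- fsum_scal_l.
  rewrite (fsum_ext k _ (fun i => fsum k (fun j => fsum n (fun c => w i c *
     (acoef n K sigma beta p i j * (w j c - w i c) +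
      Lambda k n w * (if Nat.eqb j i then 0 else gfun d0 d1 theta (dist2 n p i j) * (p i c - p j c))))))).
  2: { intros i _. apply fsum_swap. }
  rewrite fsum_sym2. unfold Aterm, Pder.
  rewrite <- fsum_scal_l, <- (fsum_scal_l k (Lambda k n w)).
  rewrite <- fsum_opp, <- fsum_plus. apply fsum_ext; intros i _.
  transitivity (/2 * fsum k (fun j => - (acoef n K sigma beta p i j * dist2 n w i j) + Lambda k n w *
     (if Nat.eqb j i then 0 else gfun d0 d1 theta (dist2 n p i j) *
        fsum n (fun c => (p i c - p j c) * (w i c - w j c))))).
  2: { rewrite fsum_plus, fsum_opp, fsum_scal_l. ring. }
  f_equal. apply fsum_ext; intros j _.
  rewrite <- fsum_plus.
  rewrite (acoef_sym _ _ _ _ _ j i), (dist2_sym n p j i), (Nat.eqb_sym i j).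
  change (dist2 n w i j) with (fsum n (fun c => (w i c - w j c)^2)). destruct (Nat.eqb j i).
  - rewrite Rmult_0_r, Rplus_0_r, <- fsum_scal_l, <- fsum_opp. apply fsum_ext; intros; ring.
  - rewrite <- !fsum_scal_l, <- fsum_opp, <- fsum_plus. apply fsum_ext; intros; ring.
Qed.

Lemma S_identity k n K sigma beta d0 d1 theta p w : (1 <= k)%nat ->
  / INR k * fsum k (fun i => fsum i (fun j => fsum n (fun c =>
     2 * (w i c - w j c) * (accel k n K sigma beta d0 d1 theta p w i c - accel k n K sigma beta d0 d1 theta p w j c))))
  = 2 * (- Aterm k n K sigma beta p w + Lambda k n w * Pder k n d0 d1 theta p w).
Proof.
  intros hk. set (a := accel k n K sigma beta d0 d1 theta p w).
  rewrite fsum_tri_sym.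
  2: { intros i j. apply fsum_ext; intros; ring. }
  2: { intros i. rewrite (fsum_ext n _ (fun _ => 0)). apply fsum_zero. intros; ring. }
  rewrite (fsum_ext k _ (fun i => 2 * fsum k (fun j => fsum n (fun c => (w i c - w j c) * (a i c - a j c))))).
  2: { intros i _. rewrite <- fsum_scal_l. apply fsum_ext; intros j _. rewrite <- fsum_scal_l. apply fsum_ext; intros; ring. }
  rewrite fsum_scal_l, quad_sum.
  rewrite (fsum_ext n _ (fun _ => 0)). 2: { intros c _. unfold a. rewrite accel_sum_zero. ring. }
  rewrite fsum_zero. unfold a. rewrite X_identity.
  assert (INR k <> 0) by (apply not_0_INR; lia). field; auto.
Qed.

Lemma Sfun_full k n w : (1 <= k)%nat ->
  fsum k (fun i => fsum k (fun j => dist2 n w i j)) = 2 * INR k * Sfun k n w.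
Proof.
  intros hk. unfold Sfun. rewrite (fsum_tri_sym k (fun i j => dist2 n w i j)).
  assert (INR k <> 0) by (apply not_0_INR; lia). field; auto.
  apply dist2_sym. apply dist2_refl.
Qed.

Lemma Sfun_nonneg k n w : 0 <= Sfun k n w.
Proof. unfold Sfun. apply Rmult_le_pos. destruct k. simpl; rewrite Rinv_0; lra. left; apply Rinv_0_lt_compat, lt_0_INR; lia.
  apply fsum_nonneg; intros; apply fsum_nonneg; intros; apply dist2_nonneg. Qed.

Lemma Lambda_sqrt k n w : Lambda k n w = sqrt (Sfun k n w).
Proof. reflexivity. Qed.

Lemma Aterm_bounds k n K sigma beta p w amin amax : (1 <= k)%nat ->
  (forall i j, (i < k)%nat -> (j < k)%nat -> amin <= acoef n K sigma beta p i j <= amax) ->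
  amin * INR k * Sfun k n w <= Aterm k n K sigma beta p w <= amax * INR k * Sfun k n w.
Proof.
  intros hk H. unfold Aterm.
  assert (E : forall a, a * INR k * Sfun k n w = / 2 * fsum k (fun i => fsum k (fun j => a * dist2 n w i j))).
  { intros a. setoid_rewrite fsum_scal_l. rewrite fsum_scal_l. rewrite Sfun_full; auto. field. }
  rewrite !E. split; apply Rmult_le_compat_l; try lra; apply fsum_le; intros i Hi; apply fsum_le; intros j Hj;
    apply Rmult_le_compat_r; try apply dist2_nonneg; apply H; auto.
Qed.

Lemma sqrt_CS n a b : Rabs (fsum n (fun c => a c * b c)) <= sqrt (fsum n (fun c => a c ^ 2)) * sqrt (fsum n (fun c => b c ^ 2)).
Proof.
  rewrite <- sqrt_mult by (apply fsum_nonneg; intros; apply pow2_ge_0).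
  rewrite <- sqrt_Rsqr_abs. apply sqrt_le_1_alt. unfold Rsqr.
  eapply Rle_trans. 2: apply CS. right; ring.
Qed.

Definition Gfun k n d0 d1 theta (p : nat -> nat -> R) :=
  / 2 * fsum k (fun i => fsum k (fun j => if Nat.eqb j i then 0 else
      Rabs (gfun d0 d1 theta (dist2 n p i j)) * sqrt (dist2 n p i j))) * sqrt (2 * INR k).

Lemma Pder_bound k n d0 d1 theta p w : (1 <= k)%nat ->
  Rabs (Pder k n d0 d1 theta p w) <= Gfun k n d0 d1 theta p * Lambda k n w.
Proof.
  intros hk. unfold Pder, Gfun. rewrite Rabs_mult, Rabs_right by lra.
  match goal with |- _ <= (/2 * ?X * ?Y) * ?Z => replace ((/2 * X * Y) * Z) with (/2 * (X * (Y * Z))) by ring end.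
  apply Rmult_le_compat_l. lra.
  eapply Rle_trans. apply fsum_abs. rewrite <- fsum_scal_r. apply fsum_le; intros i Hi.
  eapply Rle_trans. apply fsum_abs. rewrite <- fsum_scal_r. apply fsum_le; intros j Hj.
  destruct (Nat.eqb j i). rewrite Rabs_R0; lra.
  rewrite Rabs_mult. rewrite !Rmult_assoc. apply Rmult_le_compat_l. apply Rabs_pos.
  eapply Rle_trans. apply sqrt_CS. apply Rmult_le_compat_l. apply sqrt_pos.
  rewrite Lambda_sqrt, <- sqrt_mult. apply sqrt_le_1_alt.
  replace (2 * INR k * Sfun k n w) with (fsum k (fun i => fsum k (fun j => dist2 n w i j))) by (apply Sfun_full; auto).
  eapply Rle_trans. 2: apply (fsum_single_le k _ i); auto.
  2: { intros; apply fsum_nonneg; intros; apply dist2_nonneg. }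
  apply (fsum_single_le k (fun j => dist2 n w i j) j); auto. intros; apply dist2_nonneg.
  apply Rmult_le_pos; [lra|apply pos_INR]. apply Sfun_nonneg.
Qed.

Lemma jensen n (a : nat -> R) : (fsum n a)^2 <= INR n * fsum n (fun j => a j ^ 2).
Proof.
  replace (fsum n a) with (fsum n (fun j => a j * 1)) by (apply fsum_ext; intros; ring).
  eapply Rle_trans. apply CS. rewrite Rmult_comm. apply Rmult_le_compat_r.
  apply fsum_nonneg; intros; apply pow2_ge_0. rewrite fsum_const. lra.
Qed.

Lemma dev_bound k n (w : nat -> nat -> R) i : (1 <= k)%nat ->
  norm2 n (fun c => w i c - avg k w c) <= / INR k * fsum k (fun j => dist2 n w i j).
Proof.
  intros hk. assert (Hk : 0 < INR k) by (apply lt_0_INR; lia).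
  unfold norm2, dist2, norm2, avg. rewrite fsum_swap, <- fsum_scal_l. apply fsum_le; intros c _.
  replace (w i c - / INR k * fsum k (fun i0 => w i0 c)) with (/ INR k * fsum k (fun j => w i c - w j c)).
  2: { rewrite fsum_minus, fsum_const. field. lra. }
  rewrite Rpow_mult_distr.
  eapply Rle_trans. apply Rmult_le_compat_l. apply pow_le. left; apply Rinv_0_lt_compat; auto. apply jensen.
  right. field. lra.
Qed.

Lemma dev_sum_bound k n w : (1 <= k)%nat ->
  fsum k (fun i => norm2 n (fun c => w i c - avg k w c)) <= 2 * Sfun k n w.
Proof.
  intros hk. assert (Hk : 0 < INR k) by (apply lt_0_INR; lia).
  eapply Rle_trans. apply fsum_le; intros i _. apply (dev_bound k n w i hk).
  rewrite fsum_scal_l, Sfun_full by auto. right. field. lra.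
Qed.

Lemma D_inv f x l : derivable_pt_lim f x l -> f x <> 0 -> derivable_pt_lim (fun u => / f u) x (- l / (f x)^2).
Proof.
  intros H Hx. apply (derivable_pt_lim_ext (fun u => 1 / f u)). intros; unfold Rdiv; ring.
  replace (- l / (f x)^2) with ((0 * f x - l * 1) / Rsqr (f x)) by (unfold Rsqr; field; auto).
  apply (derivable_pt_lim_div (fun _ => 1) f); auto. apply derivable_pt_lim_const.
Qed.

Lemma D_pow f x l m : derivable_pt_lim f x l -> derivable_pt_lim (fun u => f u ^ m) x (INR m * f x ^ pred m * l).
Proof.
  intros H. apply (derivable_pt_lim_comp f (fun y => y ^ m)); auto. apply derivable_pt_lim_pow.
Qed.

Lemma D_lin x a b : derivable_pt_lim (fun u => a * u + b) x a.
Proof.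
  assert (H : derivable_pt_lim (fun u => a * u + b) x (a * 1 + 0)).
  2: { replace (a * 1 + 0) with a in H by ring; auto. }
  apply (derivable_pt_lim_plus (fun u => a * u) (fun _ => b)).
  apply (derivable_pt_lim_scal id). apply derivable_pt_lim_id. apply derivable_pt_lim_const.
Qed.

Definition Phi d0 d1 m r := - / (INR m * (r - d0)^m) - / (INR m * (d1 - r)^m).

Lemma Phi_deriv d0 d1 m r : (1 <= m)%nat -> d0 < r < d1 ->
  derivable_pt_lim (Phi d0 d1 m) r (/ (r - d0)^(S m) - / (d1 - r)^(S m)).
Proof.
  intros hm Hr. destruct m as [|m']. lia.
  assert (Hm : INR (S m') <> 0) by (apply not_0_INR; lia).
  assert (H0 : r - d0 <> 0) by lra. assert (H1 : d1 - r <> 0) by lra.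
  assert (P0 : (r - d0)^m' <> 0) by (apply pow_nonzero; auto).
  assert (P1 : (d1 - r)^m' <> 0) by (apply pow_nonzero; auto).
  unfold Phi.
  apply (derivable_pt_lim_minus (fun u => - / (INR (S m') * (u - d0)^(S m'))) (fun u => / (INR (S m') * (d1 - u)^(S m')))).
  - apply (derivable_pt_lim_ext (fun u => - 1 * / (INR (S m') * (u - d0)^(S m')))). intros; ring.
    set (q := INR (S m') * (r - d0) ^ S m').
    match goal with |- derivable_pt_lim _ _ ?L => replace L with (- 1 * (- (INR (S m') * (INR (S m') * (r - d0)^ (pred (S m')) * 1)) / q ^2)) end.
    2: { unfold q. cbn [pow Nat.pred]. field. repeat split; auto. }
    apply (derivable_pt_lim_scal (fun u => / (INR (S m') * (u - d0)^(S m')))).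
    apply (D_inv (fun u => INR (S m') * (u - d0)^(S m'))).
    apply (derivable_pt_lim_scal (fun u => (u - d0)^(S m'))). apply (D_pow (fun u => u - d0)).
    apply (derivable_pt_lim_ext (fun u => 1 * u + - d0)). intros; ring. apply D_lin.
    unfold q. apply Rmult_integral_contrapositive; split; auto. apply pow_nonzero; auto.
  - set (q := INR (S m') * (d1 - r) ^ S m').
    replace (/ (d1 - r) ^ S (S m')) with (- (INR (S m') * (INR (S m') * (d1 - r)^ (pred (S m')) * (-1))) / q ^2).
    2: { unfold q. cbn [pow Nat.pred]. field. repeat split; auto. }
    apply (D_inv (fun u => INR (S m') * (d1 - u)^(S m'))).
    apply (derivable_pt_lim_scal (fun u => (d1 - u)^(S m'))). apply (D_pow (fun u => d1 - u)).
    apply (derivable_pt_lim_ext (fun u => -1 * u + d1)). intros; ring. apply D_lin.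
    unfold q. apply Rmult_integral_contrapositive; split; auto. apply pow_nonzero; auto.
Qed.

Lemma pow_even_neg a m : Nat.Even m -> (- a)^m = a^m.
Proof. intros [q ->]. rewrite !pow_mult. f_equal. ring. Qed.

Lemma gfun_eq d0 d1 m r : Nat.Even (S m) ->
  gfun d0 d1 (S m) r = / (r - d0)^(S m) - / (d1 - r)^(S m).
Proof.
  intros He. unfold gfun, fpot. f_equal. f_equal. replace (r - d1) with (- (d1 - r)) by ring.
  apply pow_even_neg; auto.
Qed.

Lemma pow_le1 u m : 0 <= u <= 1 -> u ^ m <= 1.
Proof. intros H. induction m; simpl. lra. assert (0 <= u^m) by (apply pow_le; lra). nra. Qed.

Lemma invpow_lower m u B : (1 <= m)%nat -> 0 < u -> / (INR m * u^m) <= B -> / (INR m * B + 1) <= u.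
Proof.
  intros hm hu H. assert (Hm : 1 <= INR m) by (apply (le_INR 1); lia).
  assert (Hp : 0 < u^m) by (apply pow_lt; auto).
  assert (HB : 0 < B) by (eapply Rlt_le_trans; [|apply H]; apply Rinv_0_lt_compat; nra).
  destruct (Rle_or_lt 1 u) as [Hu|Hu].
  - apply Rle_trans with 1; auto. rewrite <- Rinv_1. apply Rinv_le_contravar. lra. nra.
  - assert (Hum : u^m <= u). { destruct m. lia. simpl. assert (u^m <= 1) by (apply pow_le1; lra). nra. }
    assert (H2 : 1 <= B * (INR m * u^m)).
    { apply Rmult_le_compat_r with (r := INR m * u^m) in H. rewrite Rinv_l in H. lra. nra. nra. }
    assert (H3 : 1 <= (INR m * B) * u) by nra.
    assert (H4 : 1 < (INR m * B + 1) * u) by nra.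
    apply Rmult_le_reg_r with (INR m * B + 1). nra. rewrite Rinv_l by nra. lra.
Qed.

Lemma Phi_parts_nonpos d0 d1 m r : (1 <= m)%nat -> d0 < r < d1 ->
  0 < / (INR m * (r - d0)^m) /\ 0 < / (INR m * (d1 - r)^m).
Proof.
  intros hm Hr. assert (Hm : 1 <= INR m) by (apply (le_INR 1); lia).
  split; apply Rinv_0_lt_compat; apply Rmult_lt_0_compat; try lra; apply pow_lt; lra.
Qed.

Lemma Phi_nonpos d0 d1 m r : (1 <= m)%nat -> d0 < r < d1 -> Phi d0 d1 m r <= 0.
Proof. intros hm Hr. destruct (Phi_parts_nonpos d0 d1 m r hm Hr). unfold Phi. lra. Qed.

Lemma Phi_lower d0 d1 m r B : (1 <= m)%nat -> d0 < r < d1 -> - B <= Phi d0 d1 m r ->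
  / (INR m * B + 1) <= r - d0 /\ / (INR m * B + 1) <= d1 - r.
Proof.
  intros hm Hr H. destruct (Phi_parts_nonpos d0 d1 m r hm Hr). unfold Phi in H.
  split; apply invpow_lower; auto; lra.
Qed.

Lemma gfun_bound d0 d1 m r del : Nat.Even (S m) -> 0 < del -> del <= r - d0 -> del <= d1 - r ->
  Rabs (gfun d0 d1 (S m) r) <= 2 / del ^ (S m).
Proof.
  intros He Hd H0 H1. rewrite gfun_eq by auto.
  assert (A : forall u, del <= u -> 0 < / u ^ S m <= / del ^ S m).
  { intros u Hu. split. apply Rinv_0_lt_compat, pow_lt; lra.
    apply Rinv_le_contravar. apply pow_lt; lra. apply pow_incr; lra. }
  destruct (A _ H0), (A _ H1). unfold Rdiv. apply Rabs_le. lra.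
Qed.

Lemma gfun_cont d0 d1 m r : d0 < r < d1 -> continuity_pt (gfun d0 d1 (S m)) r.
Proof.
  intros Hr. unfold gfun, fpot.
  apply (continuity_pt_minus (fun r => / (r - d0)^(S m)) (fun r => / (r - d1)^(S m))).
  - apply (continuity_pt_inv (fun r => (r - d0)^(S m))). 2: apply pow_nonzero; lra.
    apply derivable_continuous_pt. exists (INR (S m) * (r - d0)^pred (S m) * 1).
    apply (D_pow (fun u => u - d0)). apply (derivable_pt_lim_ext (fun u => 1 * u + - d0)). intros; ring. apply D_lin.
  - apply (continuity_pt_inv (fun r => (r - d1)^(S m))). 2: apply pow_nonzero; lra.
    apply derivable_continuous_pt. exists (INR (S m) * (r - d1)^pred (S m) * 1).
    apply (D_pow (fun u => u - d1)). apply (derivable_pt_lim_ext (fun u => 1 * u + - d1)). intros; ring. apply D_lin.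
Qed.

Lemma Phi_cont d0 d1 m r : (1 <= m)%nat -> d0 < r < d1 -> continuity_pt (Phi d0 d1 m) r.
Proof. intros hm Hr. apply derivable_continuous_pt. eexists. apply Phi_deriv; auto. Qed.

Lemma eps_energy (S P Q S' P' Q' : R -> R) s t c H :
  s <= t -> 0 <= c -> 0 <= H ->
  (forall u, s <= u <= t -> continuity_pt S u /\ continuity_pt P u /\ continuity_pt Q u /\ 0 <= S u) ->
  (forall u, s < u < t -> derivable_pt_lim S u (S' u) /\ derivable_pt_lim P u (P' u) /\ derivable_pt_lim Q u (Q' u)
      /\ S' u <= -2*c*S u + 2*sqrt(S u)*P' u /\ Rabs (P' u) <= H * sqrt (S u) /\ Q' u <= c * sqrt (S u)) ->
  sqrt (S t) - P t + Q t <= sqrt (S s) - P s + Q s.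
Proof.
  intros hst hc hH Hc Hd.
  apply (eps_le _ _ (1 + (c + H) * (t - s))). intros e He.
  set (Z := fun u => sqrt (S u + e^2) - P u + Q u - (c + H) * e * u).
  assert (Hz : Z t <= Z s).
  { apply (decr Z (fun u => S' u * / (2 * sqrt (S u + e^2)) - P' u + Q' u - (c + H) * e * 1)); auto.
    - intros u Hu. destruct (Hc u Hu) as (C1 & C2 & C3 & C4). unfold Z.
      apply continuity_pt_minus. apply continuity_pt_plus. apply continuity_pt_minus.
      apply (continuity_pt_comp (fun u => S u + e^2) sqrt).
      apply continuity_pt_plus; auto. apply continuity_pt_const; intros ? ?; auto.
      apply continuity_pt_sqrt. nra. auto. auto.
      apply continuity_pt_scal. apply derivable_continuous_pt, derivable_pt_id.
    - intros u Hu. destruct (Hd u Hu) as (D1 & D2 & D3 & I1 & I2 & I3).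
      assert (Hs0 : 0 <= S u) by (apply Hc; lra).
      assert (Hb : 0 < S u + e^2) by nra.
      split.
      + unfold Z. apply derivable_pt_lim_minus. apply derivable_pt_lim_plus. apply derivable_pt_lim_minus.
        * rewrite Rmult_comm. apply (derivable_pt_lim_comp (fun u => S u + e^2) sqrt).
          replace (S' u) with (S' u + 0) by ring. apply derivable_pt_lim_plus; auto. apply derivable_pt_lim_const.
          apply derivable_pt_lim_sqrt; auto.
        * auto.
        * auto.
        * apply derivable_pt_lim_scal. apply derivable_pt_lim_id.
      + set (a := sqrt (S u)). set (b := sqrt (S u + e^2)).
        fold a in I1; fold a in I2; fold a in I3. assert (Ha : 0 <= a) by apply sqrt_pos.
        assert (Ha2 : a * a = S u) by (apply sqrt_sqrt; auto).
        assert (Hb2 : b * b = S u + e^2) by (apply sqrt_sqrt; lra).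
        assert (Hbp : 0 < b) by (apply sqrt_lt_R0; auto).
        assert (Hab : a <= b) by (apply sqrt_le_1_alt; nra).
        assert (Heb : e <= b) by nra.
        assert (Hbe : b - a <= e).
        { assert ((b - a) * (b + a) = e * e) by nra.
          assert ((b - a) * (b + a) <= e * (b + a)) by nra.
          apply Rmult_le_reg_r with (b + a). lra. lra. }
        assert (Hq : a * (b - a) <= e * b).
        { apply Rle_trans with (b * (b - a)). apply Rmult_le_compat_r; lra.
          rewrite (Rmult_comm e). apply Rmult_le_compat_l; lra. }
        assert (Hp : - P' u * (b - a) <= H * e * b).
        { assert (- P' u <= H * a) by (generalize (Rle_abs (- P' u)); rewrite Rabs_Ropp; lra).
          assert (- P' u * (b - a) <= H * a * (b - a)) by (apply Rmult_le_compat_r; lra).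
          assert (H * (a * (b - a)) <= H * (e * b)) by (apply Rmult_le_compat_l; lra). nra. }
        assert (K1 : S' u * / (2 * b) <= (-2*c*(a*a) + 2*a*P' u) * / (2*b)).
        { apply Rmult_le_compat_r. left; apply Rinv_0_lt_compat; lra. rewrite Ha2; auto. }
        assert (K2 : (-2*c*(a*a) + 2*a*P' u) * / (2*b) - P' u + c * a - (c+H)*e*1
                     = (c * (a * (b - a)) + (- P' u * (b - a)) - (c+H) * e * b) / b) by (field; lra).
        assert (K3 : c * (a * (b - a)) + (- P' u * (b - a)) - (c+H) * e * b <= 0) by nra.
        assert (K4 : (c * (a * (b - a)) + (- P' u * (b - a)) - (c+H) * e * b) / b <= 0).
        { unfold Rdiv. assert (0 < / b) by (apply Rinv_0_lt_compat; lra). nra. }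
        fold b. lra. }
  unfold Z in Hz.
  assert (sqrt (S t) <= sqrt (S t + e^2)) by (apply sqrt_le_1_alt; nra).
  assert (sqrt (S s + e^2) <= sqrt (S s) + e).
  { assert (0 <= S s) by (apply Hc; lra). rewrite <- (sqrt_pow2 (sqrt (S s) + e)).
    apply sqrt_le_1_alt. assert (0 <= sqrt (S s)) by apply sqrt_pos.
    assert (sqrt (S s) * sqrt (S s) = S s) by (apply sqrt_sqrt; auto). nra.
    generalize (sqrt_pos (S s)); lra. }
  nra.
Qed.

Lemma barbalat (S P : R -> R) c C :
  0 < c ->
  (forall u, 0 <= u -> 0 <= S u) ->
  (forall u, 0 <= u -> P u <= 0) ->
  (forall u w, 0 <= u <= w -> sqrt (S w) - P w <= sqrt (S u) - P u) ->
  (forall u w, 0 <= u <= w -> Rabs (S w - S u) <= C * (w - u)) ->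
  (forall u w eta, 0 <= u <= w -> 0 < eta -> (forall z, u <= z <= w -> eta <= sqrt (S z)) ->
       sqrt (S w) - P w + c * eta * w <= sqrt (S u) - P u + c * eta * u) ->
  forall eta, 0 < eta -> exists T, 0 <= T /\ forall t, T <= t -> sqrt (S t) < eta.
Proof.
  intros hc HS HP Hmono HL Hstr eta Heta.
  set (E := fun u => sqrt (S u) - P u).
  assert (HE : forall u, 0 <= u -> 0 <= E u) by (intros u Hu; unfold E; generalize (sqrt_pos (S u)) (HP u Hu); lra).
  set (A := fun y => exists u, 0 <= u /\ y = - E u).
  assert (Hb : bound A). { exists 0. intros y [u [Hu ->]]. generalize (HE u Hu); lra. }
  assert (Hne : exists y, A y) by (exists (- E 0); exists 0; split; [lra|auto]).
  destruct (completeness A Hb Hne) as [m [Hub Hlub]].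
  set (C' := Rmax C 1). assert (HC1 : 1 <= C') by apply Rmax_r. assert (HCC : C <= C') by apply Rmax_l.
  set (del := 3 * eta^2 / (4 * C')).
  assert (Hdel : 0 < del) by (unfold del; apply Rdiv_lt_0_compat; nra).
  set (gap := c * (eta / 2) * del).
  assert (Hgap : 0 < gap) by (unfold gap; apply Rmult_lt_0_compat; [nra|auto]).
  assert (Hu0 : exists u0, 0 <= u0 /\ - E u0 > m - gap).
  { destruct (classic (exists u0, 0 <= u0 /\ - E u0 > m - gap)) as [H|H]; auto.
    exfalso. assert (Hm : is_upper_bound A (m - gap)).
    { intros y [u [Hu ->]]. apply Rnot_lt_le. intros Hlt. apply H. exists u; split; auto. }
    specialize (Hlub _ Hm). lra. }
  destruct Hu0 as [T [HT HTE]]. exists T. split; auto. intros t Ht.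
  apply Rnot_le_lt. intros Hge.
  assert (Hst : eta^2 <= S t).
  { rewrite <- (sqrt_sqrt (S t)) by (apply HS; lra). simpl. rewrite Rmult_1_r.
    apply Rmult_le_compat; lra. }
  assert (Hlow : forall z, t <= z <= t + del -> eta / 2 <= sqrt (S z)).
  { intros z Hz. assert (H1 := HL t z ltac:(lra)).
    assert (H2 := Rle_abs (- (S z - S t))). rewrite Rabs_Ropp in H2.
    assert (C * (z - t) <= C' * (z - t)) by (apply Rmult_le_compat_r; lra).
    assert (C' * (z - t) <= C' * del) by (apply Rmult_le_compat_l; lra).
    assert (C' * del = 3 * eta^2 / 4) by (unfold del; field; lra).
    rewrite <- (sqrt_pow2 (eta / 2)) by lra. apply sqrt_le_1_alt.
    replace ((eta/2)^2) with (eta^2 / 4) by field. lra. }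
  assert (Hs := Hstr t (t + del) (eta / 2) ltac:(lra) ltac:(lra) Hlow).
  assert (Hm1 := Hmono T t ltac:(lra)).
  assert (Hm2 : - E (t + del) <= m) by (apply Hub; exists (t + del); split; [lra|auto]).
  unfold E in *. unfold gap in HTE. nra.
Qed.

Lemma lipschitz (f f' : R -> R) u w C : u <= w ->
  (forall z, u <= z <= w -> continuity_pt f z) ->
  (forall z, u < z < w -> derivable_pt_lim f z (f' z) /\ Rabs (f' z) <= C) ->
  Rabs (f w - f u) <= C * (w - u).
Proof.
  intros Huw Hc Hd.
  assert (A : (fun z => f z - C * z) w <= (fun z => f z - C * z) u).
  { apply (decr (fun z => f z - C * z) (fun z => f' z - C * 1)); auto.
    - intros z Hz. apply continuity_pt_minus; auto. apply continuity_pt_scal. apply derivable_continuous_pt, derivable_pt_id.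
    - intros z Hz. destruct (Hd z Hz) as [D B]. split.
      apply derivable_pt_lim_minus; auto. apply derivable_pt_lim_scal, derivable_pt_lim_id.
      generalize (Rle_abs (f' z)); lra. }
  assert (B : (fun z => - f z - C * z) w <= (fun z => - f z - C * z) u).
  { apply (decr (fun z => - f z - C * z) (fun z => - f' z - C * 1)); auto.
    - intros z Hz. apply continuity_pt_minus; auto. apply continuity_pt_opp; auto. apply continuity_pt_scal. apply derivable_continuous_pt, derivable_pt_id.
    - intros z Hz. destruct (Hd z Hz) as [D B]. split.
      apply derivable_pt_lim_minus; auto. apply derivable_pt_lim_opp; auto. apply derivable_pt_lim_scal, derivable_pt_lim_id.
      generalize (Rle_abs (- f' z)); rewrite Rabs_Ropp; lra. }
  simpl in A, B. apply Rabs_le. lra.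
Qed.

Lemma dist2_cont (y : R -> nat -> nat -> R) n i j t :
  (forall c, (c < n)%nat -> continuity_pt (fun s => y s i c) t /\ continuity_pt (fun s => y s j c) t) ->
  continuity_pt (fun s => dist2 n (y s) i j) t.
Proof.
  intros H. unfold dist2, norm2. apply (cont_fsum n (fun c s => (y s i c - y s j c)^2)).
  intros c Hc. destruct (H c Hc). apply (cont_sq (fun s => y s i c - y s j c)).
  apply continuity_pt_minus; auto.
Qed.

Lemma dist2_deriv (y : R -> nat -> nat -> R) (y' : nat -> nat -> R) n i j t :
  (forall c, (c < n)%nat -> derivable_pt_lim (fun s => y s i c) t (y' i c) /\ derivable_pt_lim (fun s => y s j c) t (y' j c)) ->
  derivable_pt_lim (fun s => dist2 n (y s) i j) t (fsum n (fun c => 2 * (y t i c - y t j c) * (y' i c - y' j c))).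
Proof.
  intros H. unfold dist2, norm2. apply (deriv_fsum n (fun c s => (y s i c - y s j c)^2)).
  intros c Hc. destruct (H c Hc). apply (deriv_sq (fun s => y s i c - y s j c)).
  apply derivable_pt_lim_minus; auto.
Qed.

Definition ext (y : R -> nat -> nat -> R) t := y (Rmax 0 t).

Lemma ext_pos (y : R -> nat -> nat -> R) t : 0 <= t -> ext y t = y t.
Proof. intros; unfold ext; rewrite Rmax_right; auto. Qed.

Lemma sol_cont k n K sigma beta d0 d1 theta x v : is_solution k n K sigma beta d0 d1 theta x v ->
  forall i c, (i < k)%nat -> (c < n)%nat -> forall t,
    continuity_pt (fun s => ext x s i c) t /\ continuity_pt (fun s => ext v s i c) t.
Proof.
  intros [_ [H2 H3]] i c Hi Hc t. destruct (H3 i c Hi Hc) as [L1 L2]. split.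
  - apply (ext_cont (fun s => x s i c)); auto. intros u Hu. apply derivable_continuous_pt.
    exists (v u i c). apply (H2 u Hu i c Hi Hc).
  - apply (ext_cont (fun s => v s i c)); auto. intros u Hu. apply derivable_continuous_pt.
    eexists. apply (H2 u Hu i c Hi Hc).
Qed.

Lemma sol_deriv k n K sigma beta d0 d1 theta x v : is_solution k n K sigma beta d0 d1 theta x v ->
  forall t, 0 < t -> forall i c, (i < k)%nat -> (c < n)%nat ->
    derivable_pt_lim (fun s => ext x s i c) t (ext v t i c) /\
    derivable_pt_lim (fun s => ext v s i c) t (accel k n K sigma beta d0 d1 theta (ext x t) (ext v t) i c).
Proof.
  intros [_ [H2 H3]] t Ht i c Hi Hc. rewrite !ext_pos by lra. destruct (H2 t Ht i c Hi Hc). split;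
  apply (ext_deriv (fun s => _ s i c)); auto.
Qed.

Lemma sol_range k n K sigma beta d0 d1 theta x v : is_solution k n K sigma beta d0 d1 theta x v ->
  (forall i j, (i < k)%nat -> (j < k)%nat -> i <> j -> d0 < dist2 n (x 0) i j < d1) ->
  forall t i j, (i < k)%nat -> (j < k)%nat -> i <> j -> d0 < dist2 n (ext x t) i j < d1.
Proof.
  intros Hs Hinit t i j Hi Hj Hij.
  assert (Hc : continuity (fun s => dist2 n (ext x s) i j)).
  { intros s. apply dist2_cont. intros c Hc. split; apply (sol_cont _ _ _ _ _ _ _ _ _ _ Hs); auto. }
  assert (Hav : forall s, 0 <= s -> dist2 n (ext x s) i j <> d0 /\ dist2 n (ext x s) i j <> d1).
  { intros s Hs0. rewrite ext_pos by auto. destruct Hs as [H1 _]. apply H1; auto. }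
  assert (H0 : d0 < dist2 n (ext x 0) i j < d1) by (rewrite ext_pos by lra; apply Hinit; auto).
  assert (Ht : 0 <= Rmax 0 t) by apply Rmax_l.
  replace (ext x t) with (ext x (Rmax 0 t)) by (unfold ext; rewrite (Rmax_right 0 (Rmax 0 t)); auto).
  revert Ht. generalize (Rmax 0 t). clear t. intros t' Ht.
  destruct (Req_dec t' 0) as [->|Hne]. auto.
  assert (Htp : 0 < t') by lra.
  destruct (Hav t' Ht) as [N0 N1].
  split.
  - apply Rnot_le_lt. intros Hle. destruct (Rle_lt_or_eq_dec _ _ Hle) as [Hlt|]; [|congruence].
    destruct (IVT (fun s => d0 - dist2 n (ext x s) i j) 0 t') as [z [Hz Hz0]]; auto.
    apply continuity_minus; auto. apply continuity_const; intros ? ?; auto. lra. lra.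
    destruct (Hav z ltac:(lra)) as [Z0 _]. apply Z0. lra.
  - apply Rnot_le_lt. intros Hle. destruct (Rle_lt_or_eq_dec _ _ Hle) as [Hlt|]; [|congruence].
    destruct (IVT (fun s => dist2 n (ext x s) i j - d1) 0 t') as [z [Hz Hz0]]; auto.
    apply continuity_minus; auto. apply continuity_const; intros ? ?; auto. lra. lra.
    destruct (Hav z ltac:(lra)) as [_ Z1]. apply Z1. lra.
Qed.

Definition Sof k n (v : R -> nat -> nat -> R) t := Sfun k n (ext v t).
Definition Pof k n d0 d1 m (x : R -> nat -> nat -> R) t :=
  / 4 * fsum k (fun i => fsum k (fun j => if Nat.eqb j i then 0 else Phi d0 d1 m (dist2 n (ext x t) i j))).
Definition Jof k n (v : R -> nat -> nat -> R) t :=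
  sqrt (fsum k (fun i => norm2 n (fun c => ext v t i c - avg k (ext v t) c))).

Lemma S_deriv k n K sigma beta d0 d1 theta x v : is_solution k n K sigma beta d0 d1 theta x v -> (1 <= k)%nat ->
  forall t, 0 < t -> derivable_pt_lim (Sof k n v) t
    (2 * (- Aterm k n K sigma beta (ext x t) (ext v t) + Lambda k n (ext v t) * Pder k n d0 d1 theta (ext x t) (ext v t))).
Proof.
  intros Hs hk t Ht. rewrite <- S_identity by auto. unfold Sof, Sfun.
  apply (derivable_pt_lim_scal (fun s => fsum k (fun i => fsum i (fun j => dist2 n (ext v s) i j)))).
  apply (deriv_fsum k (fun i s => fsum i (fun j => dist2 n (ext v s) i j))). intros i Hi.
  apply (deriv_fsum i (fun j s => dist2 n (ext v s) i j)). intros j Hj.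
  apply (dist2_deriv (ext v) (accel k n K sigma beta d0 d1 theta (ext x t) (ext v t))).
  intros c Hc. split; apply (sol_deriv _ _ _ _ _ _ _ _ _ _ Hs t Ht); auto; lia.
Qed.

Lemma P_deriv k n K sigma beta d0 d1 m x v : is_solution k n K sigma beta d0 d1 (S m) x v ->
  (1 <= m)%nat -> Nat.Even (S m) ->
  (forall t i j, (i < k)%nat -> (j < k)%nat -> i <> j -> d0 < dist2 n (ext x t) i j < d1) ->
  forall t, 0 < t -> derivable_pt_lim (Pof k n d0 d1 m x) t (Pder k n d0 d1 (S m) (ext x t) (ext v t)).
Proof.
  intros Hs hm He Hr t Ht. unfold Pof.
  replace (Pder k n d0 d1 (S m) (ext x t) (ext v t)) with
    (/ 4 * fsum k (fun i => fsum k (fun j => if Nat.eqb j i then 0 else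
       gfun d0 d1 (S m) (dist2 n (ext x t) i j) *
       fsum n (fun c => 2 * (ext x t i c - ext x t j c) * (ext v t i c - ext v t j c))))).
  2: { unfold Pder. rewrite <- !fsum_scal_l. apply fsum_ext; intros i _. rewrite <- !fsum_scal_l.
       apply fsum_ext; intros j _. destruct (Nat.eqb j i). ring.
       rewrite (fsum_ext n _ (fun c => 2 * ((ext x t i c - ext x t j c) * (ext v t i c - ext v t j c)))) by (intros; ring).
       rewrite fsum_scal_l. field. }
  apply (derivable_pt_lim_scal (fun s => fsum k (fun i => fsum k (fun j => if Nat.eqb j i then 0 else Phi d0 d1 m (dist2 n (ext x s) i j))))).
  apply (deriv_fsum k (fun i s => fsum k (fun j => if Nat.eqb j i then 0 else Phi d0 d1 m (dist2 n (ext x s) i j)))). intros i Hi.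
  apply (deriv_fsum k (fun j s => if Nat.eqb j i then 0 else Phi d0 d1 m (dist2 n (ext x s) i j))). intros j Hj.
  destruct (Nat.eqb j i) eqn:E. apply derivable_pt_lim_const.
  apply Nat.eqb_neq in E. cbv beta iota.
  apply (derivable_pt_lim_comp (fun s => dist2 n (ext x s) i j) (Phi d0 d1 m)).
  - apply (dist2_deriv (ext x) (ext v t)). intros c Hc. split; apply (sol_deriv _ _ _ _ _ _ _ _ _ _ Hs t Ht); auto.
  - rewrite gfun_eq by auto. apply Phi_deriv; auto.
Qed.

Lemma S_cont k n K sigma beta d0 d1 theta x v : is_solution k n K sigma beta d0 d1 theta x v ->
  forall t, continuity_pt (Sof k n v) t.
Proof.
  intros Hs t. unfold Sof, Sfun.
  apply (continuity_pt_scal (fun s => fsum k (fun i => fsum i (fun j => dist2 n (ext v s) i j)))).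
  apply (cont_fsum k (fun i s => fsum i (fun j => dist2 n (ext v s) i j))). intros i Hi.
  apply (cont_fsum i (fun j s => dist2 n (ext v s) i j)). intros j Hj.
  apply dist2_cont. intros c Hc. split; apply (sol_cont _ _ _ _ _ _ _ _ _ _ Hs); auto; lia.
Qed.

Lemma P_cont k n K sigma beta d0 d1 m x v : is_solution k n K sigma beta d0 d1 (S m) x v ->
  (1 <= m)%nat ->
  (forall t i j, (i < k)%nat -> (j < k)%nat -> i <> j -> d0 < dist2 n (ext x t) i j < d1) ->
  forall t, continuity_pt (Pof k n d0 d1 m x) t.
Proof.
  intros Hs hm Hr t. unfold Pof.
  apply (continuity_pt_scal (fun s => fsum k (fun i => fsum k (fun j => if Nat.eqb j i then 0 else Phi d0 d1 m (dist2 n (ext x s) i j))))).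
  apply (cont_fsum k (fun i s => fsum k (fun j => if Nat.eqb j i then 0 else Phi d0 d1 m (dist2 n (ext x s) i j)))). intros i Hi.
  apply (cont_fsum k (fun j s => if Nat.eqb j i then 0 else Phi d0 d1 m (dist2 n (ext x s) i j))). intros j Hj.
  destruct (Nat.eqb j i) eqn:E. apply continuity_pt_const; intros ? ?; auto.
  apply Nat.eqb_neq in E. cbv beta iota.
  apply (continuity_pt_comp (fun s => dist2 n (ext x s) i j) (Phi d0 d1 m)).
  - apply dist2_cont. intros c Hc. split; apply (sol_cont _ _ _ _ _ _ _ _ _ _ Hs); auto.
  - apply Phi_cont; auto.
Qed.

Lemma G_cont k n K sigma beta d0 d1 m x v : is_solution k n K sigma beta d0 d1 (S m) x v ->
  (forall t i j, (i < k)%nat -> (j < k)%nat -> i <> j -> d0 < dist2 n (ext x t) i j < d1) ->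
  forall t, continuity_pt (fun s => Gfun k n d0 d1 (S m) (ext x s)) t.
Proof.
  intros Hs Hr t. unfold Gfun.
  apply (continuity_pt_mult (fun s => / 2 * fsum k (fun i => fsum k (fun j => if Nat.eqb j i then 0 else
      Rabs (gfun d0 d1 (S m) (dist2 n (ext x s) i j)) * sqrt (dist2 n (ext x s) i j)))) (fun _ => sqrt (2 * INR k))).
  2: apply continuity_pt_const; intros ? ?; auto.
  apply (continuity_pt_scal (fun s => fsum k (fun i => fsum k (fun j => if Nat.eqb j i then 0 else
      Rabs (gfun d0 d1 (S m) (dist2 n (ext x s) i j)) * sqrt (dist2 n (ext x s) i j))))).
  apply (cont_fsum k (fun i s => fsum k (fun j => if Nat.eqb j i then 0 else
      Rabs (gfun d0 d1 (S m) (dist2 n (ext x s) i j)) * sqrt (dist2 n (ext x s) i j)))). intros i Hi.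
  apply (cont_fsum k (fun j s => if Nat.eqb j i then 0 else
      Rabs (gfun d0 d1 (S m) (dist2 n (ext x s) i j)) * sqrt (dist2 n (ext x s) i j))). intros j Hj.
  destruct (Nat.eqb j i) eqn:E. apply continuity_pt_const; intros ? ?; auto.
  apply Nat.eqb_neq in E. cbv beta iota.
  assert (Hd : continuity_pt (fun s => dist2 n (ext x s) i j) t).
  { apply dist2_cont. intros c Hc. split; apply (sol_cont _ _ _ _ _ _ _ _ _ _ Hs); auto. }
  apply (continuity_pt_mult (fun s => Rabs (gfun d0 d1 (S m) (dist2 n (ext x s) i j))) (fun s => sqrt (dist2 n (ext x s) i j))).
  - apply (continuity_pt_comp (fun s => gfun d0 d1 (S m) (dist2 n (ext x s) i j)) Rabs).
    apply (continuity_pt_comp (fun s => dist2 n (ext x s) i j) (gfun d0 d1 (S m))); auto.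
    apply gfun_cont; auto. apply Rcontinuity_abs.
  - apply (continuity_pt_comp (fun s => dist2 n (ext x s) i j) sqrt); auto.
    apply continuity_pt_sqrt. apply dist2_nonneg.
Qed.

Lemma J_cont k n K sigma beta d0 d1 theta x v : is_solution k n K sigma beta d0 d1 theta x v ->
  forall t, continuity_pt (Jof k n v) t.
Proof.
  intros Hs t. unfold Jof.
  apply (continuity_pt_comp (fun s => fsum k (fun i => norm2 n (fun c => ext v s i c - avg k (ext v s) c))) sqrt).
  2: { apply continuity_pt_sqrt. apply fsum_nonneg; intros; unfold norm2; apply fsum_nonneg; intros; apply pow2_ge_0. }
  apply (cont_fsum k (fun i s => norm2 n (fun c => ext v s i c - avg k (ext v s) c))). intros i Hi.
  unfold norm2. apply (cont_fsum n (fun c s => (ext v s i c - avg k (ext v s) c) ^ 2)). intros c Hc.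
  apply (cont_sq (fun s => ext v s i c - avg k (ext v s) c)).
  apply continuity_pt_minus. apply (sol_cont _ _ _ _ _ _ _ _ _ _ Hs); auto.
  unfold avg. apply (continuity_pt_scal (fun s => fsum k (fun i => ext v s i c))).
  apply (cont_fsum k (fun i s => ext v s i c)). intros; apply (sol_cont _ _ _ _ _ _ _ _ _ _ Hs); auto.
Qed.

Lemma acoef_bounds n K sigma beta d1 (p : nat -> nat -> R) i j : 0 < K -> 0 < sigma -> 0 < beta ->
  dist2 n p i j <= d1 ->
  K / Rpower (sigma^2 + d1) beta <= acoef n K sigma beta p i j <= K / Rpower (sigma^2) beta.
Proof.
  intros hK hs hb Hd. unfold acoef. assert (H0 := dist2_nonneg n p i j).
  assert (Hs2 : 0 < sigma^2) by (apply pow_lt; auto).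
  assert (P1 : 0 < Rpower (sigma^2) beta) by (unfold Rpower; apply exp_pos).
  assert (P2 : 0 < Rpower (sigma^2 + dist2 n p i j) beta) by (unfold Rpower; apply exp_pos).
  assert (P3 : 0 < Rpower (sigma^2 + d1) beta) by (unfold Rpower; apply exp_pos).
  assert (M1 : Rpower (sigma^2) beta <= Rpower (sigma^2 + dist2 n p i j) beta) by (apply Rle_Rpower_l; lra).
  assert (M2 : Rpower (sigma^2 + dist2 n p i j) beta <= Rpower (sigma^2 + d1) beta) by (apply Rle_Rpower_l; lra).
  unfold Rdiv. split; apply Rmult_le_compat_l; try lra; apply Rinv_le_contravar; auto.
Qed.

Lemma energy k n K sigma beta d0 d1 m x v (Q Q' : R -> R) s t :
  is_solution k n K sigma beta d0 d1 (S m) x v -> (1 <= k)%nat -> (1 <= m)%nat -> Nat.Even (S m) ->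
  0 < K -> 0 < sigma -> 0 < beta -> 0 <= d1 ->
  (forall t i j, (i < k)%nat -> (j < k)%nat -> i <> j -> d0 < dist2 n (ext x t) i j < d1) ->
  0 <= s <= t ->
  (forall u, s <= u <= t -> continuity_pt Q u) ->
  (forall u, s < u < t -> derivable_pt_lim Q u (Q' u) /\
      Q' u <= K / Rpower (sigma^2 + d1) beta * INR k * sqrt (Sof k n v u)) ->
  sqrt (Sof k n v t) - Pof k n d0 d1 m x t + Q t <= sqrt (Sof k n v s) - Pof k n d0 d1 m x s + Q s.
Proof.
  intros Hs hk hm He hK hsig hb hd1 Hr Hst HQc HQd.
  set (c := K / Rpower (sigma^2 + d1) beta * INR k).
  assert (hc : 0 < c).
  { unfold c. apply Rmult_lt_0_compat. unfold Rdiv. apply Rmult_lt_0_compat; auto.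
    apply Rinv_0_lt_compat. unfold Rpower; apply exp_pos. apply lt_0_INR; lia. }
  destruct (continuity_ab_maj (fun u => Gfun k n d0 d1 (S m) (ext x u)) s t) as [Mx [HMx _]]. lra.
  { intros u _. apply (G_cont _ _ _ _ _ _ _ _ _ _ Hs Hr). }
  set (H := Rmax 0 (Gfun k n d0 d1 (S m) (ext x Mx))).
  apply (eps_energy (Sof k n v) (Pof k n d0 d1 m x) Q
    (fun u => 2 * (- Aterm k n K sigma beta (ext x u) (ext v u) + Lambda k n (ext v u) * Pder k n d0 d1 (S m) (ext x u) (ext v u)))
    (fun u => Pder k n d0 d1 (S m) (ext x u) (ext v u)) Q' s t c H); try lra.
  - unfold H; apply Rmax_l.
  - intros u Hu. repeat split.
    apply (S_cont _ _ _ _ _ _ _ _ _ _ Hs). apply (P_cont _ _ _ _ _ _ _ _ _ _ Hs); auto. apply HQc; auto.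
    apply Sfun_nonneg.
  - intros u Hu. destruct (HQd u Hu) as [HQ1 HQ2]. repeat split.
    + apply (S_deriv _ _ _ _ _ _ _ _ _ _ Hs); auto; lra.
    + apply (P_deriv _ _ _ _ _ _ _ _ _ _ Hs); auto; lra.
    + auto.
    + assert (HA : c * Sof k n v u <= Aterm k n K sigma beta (ext x u) (ext v u)).
      { unfold c, Sof. apply (Aterm_bounds k n K sigma beta (ext x u) (ext v u) _ (K / Rpower (sigma^2) beta)); auto.
        intros i j Hi Hj. apply acoef_bounds; auto.
        destruct (Nat.eq_dec i j) as [->|Hij]. rewrite dist2_refl. auto.
        left; apply Hr; auto. }
      rewrite Lambda_sqrt. fold (Sof k n v u). lra.
    + eapply Rle_trans. apply Pder_bound; auto. rewrite Lambda_sqrt. fold (Sof k n v u).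
      apply Rmult_le_compat_r. apply sqrt_pos. eapply Rle_trans. apply HMx. lra. unfold H; apply Rmax_r.
    + auto.
Qed.

Lemma fsum_single_ge n f i : (forall j, (j < n)%nat -> f j <= 0) -> (i < n)%nat -> fsum n f <= f i.
Proof.
  intros H Hi. assert (A := fsum_single_le n (fun j => - f j) i). rewrite fsum_opp in A.
  assert (- f i <= - fsum n f) by (apply A; auto; intros j Hj; specialize (H j Hj); lra). lra.
Qed.

Lemma fsum_nonpos n f : (forall i, (i < n)%nat -> f i <= 0) -> fsum n f <= 0.
Proof. intros H. eapply Rle_trans. apply (fsum_le n f (fun _ => 0)); auto. rewrite fsum_zero; lra. Qed.

Theorem mainTheorem2
  (k n : nat) (K sigma d0 d1 beta : R) (theta : nat)
  (hk : (2 <= k)%nat) (hK : 0 < K) (hsigma : 0 < sigma)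
  (hd0 : 0 < d0) (hd01 : d0 < d1) (hbeta0 : 0 < beta) (hbeta1 : beta <= / 2)
  (htheta_pos : (0 < theta)%nat) (htheta_even : Nat.Even theta)
  (x v : R -> nat -> nat -> R)
  (hinit : forall i j, (i < k)%nat -> (j < k)%nat -> i <> j ->
      d0 < dist2 n (x 0) i j < d1)
  (hsol : is_solution k n K sigma beta d0 d1 theta x v) :
  (forall t, 0 <= t -> forall c, (c < n)%nat -> avg k (v t) c = avg k (v 0) c)
  /\ (exists B, forall t, 0 <= t -> forall i, (i < k)%nat ->
        sqrt (norm2 n (fun c => x t i c - avg k (x t) c)) <= B)
  /\ (exists M, forall T, 0 <= T ->
        exists pr : Riemann_integrable
            (fun t => sqrt (fsum k (fun i => norm2 n (fun c => v t i c - avg k (v t) c))))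
            0 T,
          RiemannInt pr <= M)
  /\ (forall i, (i < k)%nat -> forall eps, 0 < eps -> exists T, forall t, T <= t ->
        sqrt (norm2 n (fun c => v t i c - avg k (v 0) c)) < eps).
Proof.
  assert (hk1 : (1 <= k)%nat) by lia.
  assert (Hk : 0 < INR k) by (apply lt_0_INR; lia).
  destruct theta as [|m]. lia.
  assert (hm : (1 <= m)%nat). { destruct m. destruct htheta_even as [q Hq]. lia. lia. }
  assert (hd1 : 0 <= d1) by lra.
  assert (Hr := sol_range _ _ _ _ _ _ _ _ _ _ hsol hinit).
  set (c := K / Rpower (sigma^2 + d1) beta * INR k).
  assert (hc : 0 < c).
  { unfold c. apply Rmult_lt_0_compat; auto. unfold Rdiv. apply Rmult_lt_0_compat; auto.
    apply Rinv_0_lt_compat. unfold Rpower; apply exp_pos. }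
  set (Sv := Sof k n v). set (Pv := Pof k n d0 d1 m x).
  set (E := fun t => sqrt (Sv t) - Pv t).
  assert (HPn : forall t, Pv t <= 0).
  { intros t. unfold Pv, Pof. assert (0 < / 4) by lra.
    assert (fsum k (fun i => fsum k (fun j => if Nat.eqb j i then 0 else Phi d0 d1 m (dist2 n (ext x t) i j))) <= 0).
    { apply fsum_nonpos; intros i Hi. apply fsum_nonpos; intros j Hj.
      destruct (Nat.eqb j i) eqn:Ej; cbv beta iota. lra. apply Nat.eqb_neq in Ej. apply Phi_nonpos; auto. }
    apply Rle_trans with (/4 * 0). apply Rmult_le_compat_l; lra. lra. }
  assert (HS0 : forall t, 0 <= Sv t) by (intros; apply Sfun_nonneg).
  assert (HE0 : forall t, 0 <= E t) by (intros t; unfold E; generalize (sqrt_pos (Sv t)) (HPn t); lra).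
  assert (Hmono : forall s t, 0 <= s <= t -> E t <= E s).
  { intros s t Hst. unfold E.
    assert (H := energy k n K sigma beta d0 d1 m x v (fun _ => 0) (fun _ => 0) s t hsol hk1 hm htheta_even hK hsigma hbeta0 hd1 Hr Hst).
    unfold Sv, Pv. rewrite <- (Rplus_0_r (_ - _)), <- (Rplus_0_r (sqrt (Sof k n v s) - _)). apply H.
    intros; apply continuity_pt_const; intros ? ?; auto.
    intros u Hu. split. apply derivable_pt_lim_const. fold c. apply Rmult_le_pos; [lra|apply sqrt_pos]. }
  set (E0 := E 0).
  assert (HE0p : 0 <= E0) by apply HE0.
  assert (HLb : forall t, 0 <= t -> sqrt (Sv t) <= E0 /\ - Pv t <= E0).
  { intros t Ht. assert (H := Hmono 0 t ltac:(lra)). unfold E0. unfold E in *.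
    generalize (sqrt_pos (Sv t)) (HPn t). lra. }
  assert (HSb : forall t, 0 <= t -> Sv t <= E0 ^ 2).
  { intros t Ht. destruct (HLb t Ht). rewrite <- (sqrt_sqrt (Sv t)) by auto. simpl. rewrite Rmult_1_r.
    generalize (sqrt_pos (Sv t)); intros. apply Rmult_le_compat; lra. }
  set (del := / (INR m * (4 * E0) + 1)).
  assert (Hm1 : 1 <= INR m) by (apply (le_INR 1); lia).
  assert (Hdel : 0 < del) by (unfold del; apply Rinv_0_lt_compat; nra).
  assert (Hdr : forall t, 0 <= t -> forall i j, (i < k)%nat -> (j < k)%nat -> i <> j ->
     del <= dist2 n (ext x t) i j - d0 /\ del <= d1 - dist2 n (ext x t) i j).
  { intros t Ht i j Hi Hj Hij. apply Phi_lower; auto.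
    destruct (HLb t Ht) as [_ HP1]. unfold Pv, Pof in HP1.
    set (T := fun i j => if Nat.eqb j i then 0 else Phi d0 d1 m (dist2 n (ext x t) i j)) in HP1.
    assert (HT : forall i j, (i < k)%nat -> (j < k)%nat -> T i j <= 0).
    { intros a b Ha Hb. unfold T. destruct (Nat.eqb b a) eqn:Eb; cbv beta iota. lra.
      apply Nat.eqb_neq in Eb. apply Phi_nonpos; auto. }
    assert (A1 : fsum k (fun i => fsum k (fun j => T i j)) <= fsum k (fun j => T i j)).
    { apply (fsum_single_ge k (fun i => fsum k (fun j => T i j))); auto.
      intros a Ha. apply fsum_nonpos; auto. }
    assert (A2 : fsum k (fun j => T i j) <= T i j) by (apply fsum_single_ge; auto).
    assert (A3 : T i j = Phi d0 d1 m (dist2 n (ext x t) i j)).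
    { unfold T. destruct (Nat.eqb j i) eqn:Eb. apply Nat.eqb_eq in Eb. lia. auto. }
    assert (HE : fsum k (fun i => fsum k (fun j => T i j)) = fsum k (fun i => fsum k (fun j =>
       if Nat.eqb j i then 0 else Phi d0 d1 m (dist2 n (ext x t) i j)))) by reflexivity.
    rewrite <- HE in HP1. lra. }
  set (Gmax := / 2 * (INR k * (INR k * (2 / del ^ S m * sqrt d1))) * sqrt (2 * INR k)).
  assert (HGb : forall t, 0 <= t -> Gfun k n d0 d1 (S m) (ext x t) <= Gmax).
  { intros t Ht. unfold Gfun, Gmax. apply Rmult_le_compat_r. apply sqrt_pos. apply Rmult_le_compat_l. lra.
    rewrite <- fsum_const. apply fsum_le; intros i Hi. rewrite <- fsum_const. apply fsum_le; intros j Hj.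
    assert (0 <= 2 / del ^ S m) by (unfold Rdiv; apply Rmult_le_pos; [lra|left; apply Rinv_0_lt_compat, pow_lt; auto]).
    destruct (Nat.eqb j i) eqn:Eb; cbv beta iota. apply Rmult_le_pos; auto; apply sqrt_pos.
    apply Nat.eqb_neq in Eb. destruct (Hdr t Ht i j Hi Hj ltac:(auto)) as [D1 D2].
    apply Rmult_le_compat. apply Rabs_pos. apply sqrt_pos. apply gfun_bound; auto; lra.
    apply sqrt_le_1_alt. generalize (Hr t i j Hi Hj ltac:(auto)). lra. }
  assert (HGp : 0 <= Gmax) by (eapply Rle_trans; [|apply (HGb 0); lra]; unfold Gfun;
     apply Rmult_le_pos; [|apply sqrt_pos]; apply Rmult_le_pos; [lra|];
     apply fsum_nonneg; intros i _; apply fsum_nonneg; intros j _; destruct (Nat.eqb j i); [lra|];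
     apply Rmult_le_pos; [apply Rabs_pos|apply sqrt_pos]).
  set (amax := K / Rpower (sigma^2) beta).
  assert (Hamax : 0 < amax) by (unfold amax, Rdiv; apply Rmult_lt_0_compat; auto; apply Rinv_0_lt_compat; unfold Rpower; apply exp_pos).
  set (Cl := (2 * amax * INR k + 2 * Gmax) * E0 ^ 2).
  assert (HLip : forall u w, 0 <= u <= w -> Rabs (Sv w - Sv u) <= Cl * (w - u)).
  { intros u w Huw.
    apply (lipschitz Sv (fun z => 2 * (- Aterm k n K sigma beta (ext x z) (ext v z) + Lambda k n (ext v z) * Pder k n d0 d1 (S m) (ext x z) (ext v z)))); try lra.
    intros; apply (S_cont _ _ _ _ _ _ _ _ _ _ hsol).
    intros z Hz. split. apply (S_deriv _ _ _ _ _ _ _ _ _ _ hsol); auto; lra.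
    assert (HA := Aterm_bounds k n K sigma beta (ext x z) (ext v z) (K / Rpower (sigma^2 + d1) beta) amax hk1).
    destruct HA as [HA1 HA2].
    { intros i j Hi Hj. apply acoef_bounds; auto. destruct (Nat.eq_dec i j) as [->|Hij]. rewrite dist2_refl. auto.
      left; apply Hr; auto. }
    assert (HPd := Pder_bound k n d0 d1 (S m) (ext x z) (ext v z) hk1).
    rewrite Lambda_sqrt in *. fold (Sof k n v z) in *. fold (Sv z) in *.
    assert (Hsz : sqrt (Sv z) * sqrt (Sv z) = Sv z) by (apply sqrt_sqrt; auto).
    assert (HG := HGb z ltac:(lra)). assert (HSz := HSb z ltac:(lra)).
    set (A := Aterm k n K sigma beta (ext x z) (ext v z)) in *.
    set (Pd := Pder k n d0 d1 (S m) (ext x z) (ext v z)) in *.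
    set (L := sqrt (Sv z)) in *. assert (HL0 : 0 <= L) by apply sqrt_pos.
    assert (HA0 : 0 <= A) by (fold c in HA1; generalize (HS0 z); nra).
    assert (H1 : Rabs (2 * (- A + L * Pd)) <= 2 * (A + L * Rabs Pd)).
    { rewrite Rabs_mult, (Rabs_right 2) by lra. apply Rmult_le_compat_l. lra.
      eapply Rle_trans. apply Rabs_triang. rewrite Rabs_Ropp, Rabs_right by lra. rewrite Rabs_mult, (Rabs_right L) by lra. lra. }
    assert (H2 : L * Rabs Pd <= Gmax * Sv z).
    { apply Rle_trans with (L * (Gfun k n d0 d1 (S m) (ext x z) * L)). apply Rmult_le_compat_l; auto.
      rewrite <- Hsz. fold L. nra. }
    assert (H3 : (2 * amax * INR k + 2 * Gmax) * Sv z <= Cl).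
    { unfold Cl. apply Rmult_le_compat_l; auto. nra. }
    nra. }
  assert (Hstr : forall u w eta, 0 <= u <= w -> 0 < eta -> (forall z, u <= z <= w -> eta <= sqrt (Sv z)) ->
       sqrt (Sv w) - Pv w + c * eta * w <= sqrt (Sv u) - Pv u + c * eta * u).
  { intros u w eta Huw Heta Hz.
    apply (energy k n K sigma beta d0 d1 m x v (fun z => c * eta * z) (fun z => c * eta * 1) u w hsol hk1 hm htheta_even hK hsigma hbeta0 hd1 Hr Huw).
    - intros z _. apply continuity_pt_scal. apply derivable_continuous_pt, derivable_pt_id.
    - intros z Hz'. split. apply (derivable_pt_lim_scal id (c * eta) z 1), derivable_pt_lim_id.
      fold c. rewrite Rmult_1_r. apply Rmult_le_compat_l. lra. apply Hz; lra. }
  assert (Hbar := barbalat Sv Pv c Cl hc (fun u _ => HS0 u) (fun u _ => HPn u) (fun u w H => Hmono u w H) HLip Hstr).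
  assert (Havg : forall c0, (c0 < n)%nat -> forall t, 0 <= t -> avg k (ext v t) c0 = avg k (ext v 0) c0).
  { intros c0 Hc0 t Ht.
    set (g := fun s => avg k (ext v s) c0).
    assert (Hgc : forall u, continuity_pt g u).
    { intros u. unfold g, avg. apply (continuity_pt_scal (fun s => fsum k (fun i => ext v s i c0))).
      apply (cont_fsum k (fun i s => ext v s i c0)). intros; apply (sol_cont _ _ _ _ _ _ _ _ _ _ hsol); auto. }
    assert (Hgd : forall u, 0 < u -> derivable_pt_lim g u 0).
    { intros u Hu. unfold g, avg.
      replace 0 with (/ INR k * fsum k (fun i => accel k n K sigma beta d0 d1 (S m) (ext x u) (ext v u) i c0))
        by (rewrite accel_sum_zero; ring).
      apply (derivable_pt_lim_scal (fun s => fsum k (fun i => ext v s i c0))).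
      apply (deriv_fsum k (fun i s => ext v s i c0)). intros i Hi.
      apply (sol_deriv _ _ _ _ _ _ _ _ _ _ hsol u Hu i c0); auto. }
    assert (A1 : g t <= g 0).
    { apply (decr g (fun _ => 0)); auto. intros u Hu. split; [apply Hgd; lra|lra]. }
    assert (A2 : - g t <= - g 0).
    { apply (decr (fun s => - g s) (fun _ => - 0)); auto. intros u _; apply continuity_pt_opp; auto.
      intros u Hu. split; [apply derivable_pt_lim_opp, Hgd; lra|lra]. }
    unfold g in *. lra. }
  split; [|split; [|split]].
  - intros t Ht c0 Hc0. rewrite <- (ext_pos v t Ht), <- (ext_pos v 0) by lra. apply Havg; auto.
  - exists (sqrt d1). intros t Ht i Hi. apply sqrt_le_1_alt. rewrite <- (ext_pos x t Ht).
    eapply Rle_trans. apply dev_bound; auto.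
    apply Rle_trans with (/ INR k * (INR k * d1)). apply Rmult_le_compat_l. left; apply Rinv_0_lt_compat; auto.
    rewrite <- fsum_const. apply fsum_le. intros j Hj. destruct (Nat.eq_dec i j) as [->|Hij].
    rewrite dist2_refl; auto. left; apply Hr; auto.
    right; field; lra.
  - exists (E0 * sqrt 2 / c). intros T HT.
    assert (HJc : forall t, continuity_pt (Jof k n v) t) by apply (J_cont _ _ _ _ _ _ _ _ _ _ hsol).
    assert (C0 : forall t, 0 <= t <= T -> continuity_pt (Jof k n v) t) by (intros; apply HJc).
    assert (prJ : Riemann_integrable (Jof k n v) 0 T) by (apply continuity_implies_RiemannInt; auto).
    assert (Heq : forall t, 0 <= t -> Jof k n v t = sqrt (fsum k (fun i => norm2 n (fun c => v t i c - avg k (v t) c)))).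
    { intros t Ht. unfold Jof. rewrite ext_pos; auto. }
    assert (pr : Riemann_integrable (fun t => sqrt (fsum k (fun i => norm2 n (fun c => v t i c - avg k (v t) c)))) 0 T).
    { refine (Riemann_integrable_ext _ _ prJ). intros t Ht. rewrite Rmin_left in Ht by lra. apply Heq; lra. }
    exists pr.
    rewrite (RiemannInt_P18 pr prJ HT (fun t Ht => eq_sym (Heq t ltac:(lra)))).
    rewrite (RiemannInt_P20 HT (FTC_P1 HT C0) prJ).
    set (prim := primitive HT (FTC_P1 HT C0)).
    assert (Hpd : forall u, 0 <= u <= T -> derivable_pt_lim prim u (Jof k n v u)).
    { intros u Hu. apply RiemannInt_P28; auto. }
    assert (Hs2 : 0 < sqrt 2) by (apply sqrt_lt_R0; lra).
    assert (HEn := energy k n K sigma beta d0 d1 m x v (fun u => c / sqrt 2 * prim u) (fun u => c / sqrt 2 * Jof k n v u)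
        0 T hsol hk1 hm htheta_even hK hsigma hbeta0 hd1 Hr ltac:(lra)).
    assert (HE : sqrt (Sv T) - Pv T + c / sqrt 2 * prim T <= sqrt (Sv 0) - Pv 0 + c / sqrt 2 * prim 0).
    { apply HEn.
      - intros u Hu. apply continuity_pt_scal. apply derivable_continuous_pt. exists (Jof k n v u). apply Hpd; auto.
      - intros u Hu. split. apply derivable_pt_lim_scal. apply Hpd; lra.
        fold c. fold (Sv u).
        assert (HJ : Jof k n v u <= sqrt 2 * sqrt (Sv u)).
        { unfold Jof. rewrite <- sqrt_mult by (lra || apply HS0). apply sqrt_le_1_alt. apply dev_sum_bound; auto. }
        apply Rle_trans with (c / sqrt 2 * (sqrt 2 * sqrt (Sv u))). apply Rmult_le_compat_l; auto.
        unfold Rdiv; apply Rmult_le_pos; [lra|left; apply Rinv_0_lt_compat; auto].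
        right; field; lra. }
    assert (HET := HE0 T). unfold E0, E in *.
    assert (c / sqrt 2 * (prim T - prim 0) <= sqrt (Sv 0) - Pv 0) by lra.
    apply Rmult_le_reg_l with (c / sqrt 2). unfold Rdiv; apply Rmult_lt_0_compat; auto; apply Rinv_0_lt_compat; auto.
    replace (c / sqrt 2 * ((sqrt (Sv 0) - Pv 0) * sqrt 2 / c)) with (sqrt (Sv 0) - Pv 0) by (field; lra). lra.
  - intros i Hi eps Heps.
    assert (Hs2 : 0 < sqrt 2) by (apply sqrt_lt_R0; lra).
    destruct (Hbar (eps / sqrt 2)) as [T [HT0 HT]]. unfold Rdiv; apply Rmult_lt_0_compat; auto; apply Rinv_0_lt_compat; auto.
    exists T. intros t Ht. assert (Ht0 : 0 <= t) by lra.
    assert (HN : norm2 n (fun c => v t i c - avg k (v 0) c) = norm2 n (fun c => ext v t i c - avg k (ext v t) c)).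
    { unfold norm2. apply fsum_ext; intros c0 Hc0. rewrite (Havg c0 Hc0 t Ht0), (ext_pos v t Ht0), (ext_pos v 0) by lra. auto. }
    rewrite HN.
    assert (H1 : norm2 n (fun c => ext v t i c - avg k (ext v t) c) <= 2 * Sv t).
    { eapply Rle_trans. 2: apply dev_sum_bound; auto.
      apply (fsum_single_le k (fun i => norm2 n (fun c => ext v t i c - avg k (ext v t) c))); auto.
      intros; unfold norm2; apply fsum_nonneg; intros; apply pow2_ge_0. }
    apply Rle_lt_trans with (sqrt (2 * Sv t)). apply sqrt_le_1_alt; auto.
    rewrite sqrt_mult by (lra || apply HS0).
    specialize (HT t Ht). replace eps with (sqrt 2 * (eps / sqrt 2)) by (field; lra).
    apply Rmult_lt_compat_l; auto.
Qed.
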